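(* Let $n\ge2$ and let $A=(a_{ij})$ be an $n\times n$ nonnegative irreducible matrix with all diagonal entries $0$ and row sums $r_1\ge r_2\ge\cdots\ge r_n$. Let $N=\max_{i\ne j}a_{ij}$ and assume $N>0$. Then for $1\le i\le n$, \[\rho(A)\le \frac{r_i-N+\sqrt{(r_i+N)^2+4N\sum_{k=1}^{i-1}(r_k-r_i)}}{2}.\] Equality holds if and only if $r_1=\cdots=r_n$, or for some $2\le t\le i$: (i) $a_{kl}=N$ for all $1\le k\le n$, $1\le l\le t-1$, $k\ne l$; (ii) $r_t=\cdots=r_n$.
   Context: $\rho(A)$ denotes the spectral radius of $A$. An empty sum equals $0$. *)

(* Defs.v *)
From HB Require Import structures.
From mathcomp Require Import all_boot all_order all_algebra all_field.
Set Implicit Arguments. Unset Strict Implicit. Unset Printing Implicit Defensive.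
Import Order.TTheory GRing.Theory Num.Theory.
Local Open Scope ring_scope.

Definition eigenseq (C : closedFieldType) (n : nat) (A : 'M[C]_n) : seq C :=
  sval (closed_field_poly_normal (char_poly A)).

(* Spectral radius: the largest modulus of an eigenvalue
   (0 for the empty matrix). *)
Definition spectral_radius (C : numClosedFieldType) (n : nat) (A : 'M[C]_n) : C :=
  \big[Num.max/0]_(z <- eigenseq A) `|z|.

Definition row_sum (C : numClosedFieldType) (n : nat) (A : 'M[C]_n) (i : 'I_n) : C :=
  \sum_(j < n) A i j.

Definition max_offdiag (C : numClosedFieldType) (n : nat) (A : 'M[C]_n) : C :=
  \big[Num.max/0]_(i < n) \big[Num.max/0]_(j < n | j != i) A i j.

Definition nonneg_mx (C : numClosedFieldType) (n : nat) (A : 'M[C]_n) : Prop :=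
  forall i j, 0 <= A i j.

(* Irreducible (n >= 2 case): the directed graph with an edge k -> l iff
   a_kl <> 0 is strongly connected. *)
Definition irreducible_mx (C : numClosedFieldType) (n : nat) (A : 'M[C]_n) : Prop :=
  forall i j : 'I_n, connect (fun k l : 'I_n => A k l != 0) i j.

(* Main.v *)
Require Import Defs.
From HB Require Import structures.
From mathcomp Require Import all_boot all_order all_algebra all_field.
From mathcomp Require Import ring.
Import Order.TTheory GRing.Theory Num.Theory.
Local Open Scope ring_scope.

Lemma bigmax_props (C : numClosedFieldType) (T : eqType) (s : seq T) (P : pred T) (f : T -> C) :
  (forall x, P x -> 0 <= f x) ->
  0 <= \big[Num.max/0]_(x <- s | P x) f x /\
  (forall x, x \in s -> P x -> f x <= \big[Num.max/0]_(x <- s | P x) f x) /\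
  (\big[Num.max/0]_(x <- s | P x) f x = 0 \/
   exists x, [/\ x \in s, P x & \big[Num.max/0]_(x <- s | P x) f x = f x]).
Proof.
move=> hf; elim: s => [|a s [IH0 [IH1 IH2]]].
  by rewrite big_nil; split=> //; split=> //; left.
rewrite big_cons; case: ifP => Pa; last first.
  split=> //; split; last first.
    case: IH2 => [->|[x [xs Px ->]]]; [by left|right; exists x; split=> //].
    by rewrite inE; apply/orP; right.
  move=> x; rewrite inE => /orP [/eqP -> | xs Px]; first by rewrite Pa.
  exact: IH1.
have ra : f a \is Num.real by apply: ger0_real; exact: hf.
have rM : \big[Num.max/0]_(x <- s | P x) f x \is Num.real by apply: ger0_real.
case: (real_leP ra rM) => h.
  split=> //; split; last first.
    case: IH2 => [->|[x [xs Px ->]]]; [by left|right; exists x; split=> //].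
    by rewrite inE; apply/orP; right.
  move=> x; rewrite inE => /orP [/eqP -> //| xs Px]; exact: IH1.
split; first exact: hf.
split; last by right; exists a; split=> //; rewrite inE eqxx.
move=> x; rewrite inE => /orP [/eqP -> //| xs Px].
by apply: le_trans (IH1 _ xs Px) (ltW h).
Qed.

Lemma exists_max (C : numClosedFieldType) n (f : 'I_n -> C) (k1 : 'I_n) :
  (forall k, 0 <= f k) -> exists k0, forall k, f k <= f k0.
Proof.
move=> hf.
have [h0 [h1 h2]] := @bigmax_props C _ (index_enum 'I_n) predT f (fun k _ => hf k).
case: h2 => [e|[x [_ _ e]]].
  exists k1 => k; apply: le_trans (hf k1).
  by rewrite -e; apply: h1 => //; rewrite mem_index_enum.
by exists x => k; rewrite -e; apply: h1 => //; rewrite mem_index_enum.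
Qed.

Lemma char_poly_tr (F : fieldType) n (A : 'M[F]_n) : char_poly A^T = char_poly A.
Proof.
rewrite /char_poly -det_tr; congr (\det _).
rewrite /char_poly_mx linearB /= tr_scalar_mx map_trmx.
by congr (_ - _); apply/matrixP => i j; rewrite !mxE.
Qed.

Lemma eigenseq_mem (C : numClosedFieldType) n (A : 'M[C]_n) z :
  (z \in eigenseq A) <->
  exists v : 'I_n -> C, (exists k, v k != 0) /\ forall k, \sum_l A k l * v l = z * v k.
Proof.
have -> : (z \in eigenseq A) = root (char_poly A) z.
  rewrite /eigenseq; case: (closed_field_poly_normal _) => s /= hs.
  rewrite hs (monicP (char_poly_monic A)) scale1r root_prod_XsubC //.
rewrite -char_poly_tr -eigenvalue_root_char; split.
  move/eigenvalueP => [v hv vn0].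
  exists (fun k => v 0 k); split.
    case: (pickP (fun k => v 0 k != 0)) => [k hk|hall]; first by exists k.
    exfalso; move/negP: vn0; apply; apply/eqP/rowP => k; rewrite mxE.
    by have := hall k; move/negbFE/eqP.
  move=> k; have := congr1 (fun M : 'rV[C]_n => M 0 k) hv; rewrite !mxE => <-.
  by apply: eq_bigr => l _; rewrite !mxE mulrC.
move=> [v [[k vk] hv]]; apply/eigenvalueP; exists (\row_l v l).
  apply/rowP => j; rewrite !mxE -hv; apply: eq_bigr => l _; rewrite !mxE mulrC //.
apply/negP => /eqP/rowP /(_ k); rewrite !mxE => e; by rewrite e eqxx in vk.
Qed.
Lemma pf_bound (C : numClosedFieldType) n (A : 'M[C]_n) (d : 'I_n -> C) (th lam : C)
  (v : 'I_n -> C) :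
  nonneg_mx A -> (forall k, 0 < d k) -> (forall k, \sum_l A k l * d l <= th * d k) ->
  (exists k, v k != 0) -> (forall k, \sum_l A k l * v l = lam * v k) ->
  `|lam| <= th /\
  (`|lam| = th -> irreducible_mx A -> forall k, \sum_l A k l * d l = th * d k).
Proof.
move=> hA hd hle [k1 vk1] hv.
pose y := fun k => `|v k| / d k.
have y0 : forall k, 0 <= y k by move=> k; apply: divr_ge0 => //; exact: ltW.
have [k0 hk0] := @exists_max C n y k1 y0.
pose M := y k0.
have vy : forall k, `|v k| = d k * y k.
  by move=> k; rewrite /y mulrC divfK // gt_eqF.
have Mpos : 0 < M.
  apply: lt_le_trans (hk0 k1); apply: divr_gt0 => //; by rewrite normr_gt0.
have chain : forall k, y k = M ->
  [/\ `|lam| * `|v k| <= \sum_l A k l * `|v l|,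
      \sum_l A k l * `|v l| <= M * \sum_l A k l * d l &
      M * \sum_l A k l * d l <= th * `|v k|].
  move=> k yk; split.
  - rewrite -normrM -hv; apply: le_trans (ler_norm_sum _ _ _) _.
    by apply: ler_sum => l _; rewrite normrM (ger0_norm (hA k l)).
  - rewrite mulr_sumr; apply: ler_sum => l _.
    rewrite mulrCA; apply: ler_wpM2l => //; rewrite vy mulrC.
    apply: ler_wpM2r; [exact: ltW | exact: hk0].
  - rewrite vy yk mulrA [_ * M]mulrC; apply: ler_wpM2l; [exact: ltW | exact: hle].
have bnd : `|lam| <= th.
  have [h1 h2 h3] := chain k0 erefl.
  have vpos : 0 < `|v k0| by rewrite vy mulr_gt0.
  by rewrite -(ler_pM2r vpos); apply: le_trans h3; apply: le_trans h2.
split=> // hlt hirr.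
have tight : forall k, y k = M ->
   \sum_l A k l * d l = th * d k /\ forall l, A k l != 0 -> y l = M.
  move=> k yk; have [h1 h2 h3] := chain k yk.
  rewrite hlt in h1.
  have e23 : M * \sum_l A k l * d l = th * `|v k|.
    by apply: le_anti; rewrite h3 /=; exact: (le_trans h1 h2).
  have e12 : \sum_l A k l * `|v l| = M * \sum_l A k l * d l.
    apply: le_anti; rewrite h2 /= e23 //.
  split.
    apply: (mulfI (negbT (gt_eqF Mpos))); rewrite e23 vy yk; by rewrite [RHS]mulrC mulrA.
  move=> l Akl.
  have hz : \sum_l A k l * (d l * M - `|v l|) = 0.
    rewrite mulr_sumr in e12.
    under eq_bigr do rewrite mulrBr.
    rewrite sumrB e12; apply/eqP; rewrite subr_eq0; apply/eqP; apply: eq_bigr => i _; by rewrite mulrA mulrC.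
  have ge : forall l, true -> 0 <= A k l * (d l * M - `|v l|).
    move=> l' _; apply: mulr_ge0 => //; rewrite subr_ge0 vy.
    apply: ler_wpM2l; [exact: ltW | exact: hk0].
  have := @psumr_eq0P _ _ _ _ ge hz l isT.
  move=> /eqP; rewrite mulf_eq0 (negbTE Akl) /= subr_eq0 vy => /eqP e.
  by apply: (mulfI (negbT (gt_eqF (hd l)))); rewrite e.
have allM : forall j, y j = M.
  have pth : forall p x, y x = M -> path (fun k l => A k l != 0) x p -> y (last x p) = M.
    elim=> //= a p IH x hx /andP [ha hp].
    by apply: IH => //; apply: (tight x hx).2.
  move=> j; have /connectP [p hp ->] := hirr k0 j.
  exact: pth.
by move=> k; apply: (tight k (allM k)).1.
Qed.
Theorem corollary2 (C : numClosedFieldType) (n : nat) (A : 'M[C]_n)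
  (hn : (2 <= n)%N)
  (hnn : nonneg_mx A) (hirr : irreducible_mx A)
  (hdiag : forall i, A i i = 0)
  (hsorted : forall k l : 'I_n, (k <= l)%N -> row_sum A l <= row_sum A k)
  (hN : 0 < max_offdiag A) :
  forall i : 'I_n,
    let N := max_offdiag A in
    let r := row_sum A in
    let bound := (r i - N +
        sqrtC ((r i + N) ^+ 2 + 4 * N * \sum_(k < n | (k < i)%N) (r k - r i))) / 2 in
    spectral_radius A <= bound /\
    (spectral_radius A = bound <->
       ((forall k l : 'I_n, r k = r l) \/
        exists t : 'I_n, [/\ (1 <= t)%N, (t <= i)%N,
          (forall k l : 'I_n, k != l -> (l < t)%N -> A k l = N) &
          (forall k : 'I_n, (t <= k)%N -> r k = r t)])).
Proof.
move=> i N r th.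
have N0 : 0 < N := hN.
have Aoff : forall k l, k != l -> A k l <= N.
  move=> k l kl.
  have [_ [h1 _]] := @bigmax_props C _ (index_enum 'I_n) (fun j => j != k) (A k)
     (fun j _ => hnn k j).
  have [_ [h2 _]] := @bigmax_props C _ (index_enum 'I_n) predT
     (fun k => \big[Num.max/0]_(j <- index_enum 'I_n | j != k) A k j)
     (fun k _ => (@bigmax_props C _ (index_enum 'I_n) (fun j => j != k) (A k)
     (fun j _ => hnn k j)).1).
  apply: le_trans (h1 l (mem_index_enum _) _) _; first by rewrite eq_sym.
  exact: (h2 k (mem_index_enum _) isT).
have r0 : forall k, 0 <= r k by move=> k; apply: sumr_ge0 => l _; exact: hnn.
set S := \sum_(k < n | (k < i)%N) (r k - r i).
have S0 : 0 <= S.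
  apply: sumr_ge0 => k ki; rewrite subr_ge0; apply: hsorted; exact: ltnW.
set D := (r i + N) ^+ 2 + 4 * N * S.
set s := sqrtC D.
have s2 : s ^+ 2 = D by rewrite sqrtCK.
have sge : r i + N <= s.
  have h0 : 0 <= r i + N by apply: addr_ge0 => //; exact: ltW.
  rewrite -(@ler_pXn2r _ 2) //; last by rewrite nnegrE sqrtC_ge0 addr_ge0 // ?sqr_ge0 //
     mulr_ge0 // mulr_ge0 // ltW.
  by rewrite s2 /D lerDl mulr_ge0 // mulr_ge0 // ltW.
have two0 : (2 : C) != 0 by rewrite pnatr_eq0.
have thE : th = (r i - N + s) / 2 by [].
have thri : r i <= th.
  have : th - r i = (s - (r i + N)) / 2 by rewrite thE; field.
  by move/eqP; rewrite subr_eq => /eqP ->; rewrite lerDr divr_ge0 // subr_ge0.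
have th0 : 0 <= th by apply: le_trans thri.
have thN : 0 < th + N by rewrite (lt_le_trans N0) // lerDr.
have quad : N * S = (th - r i) * (th + N).
  have -> : N * S = (s ^+ 2 - (r i + N) ^+ 2) / 4.
    by rewrite s2 /D; field.
  by rewrite thE; field.
pose c := fun k : 'I_n => if (k < i)%N then (r k - r i) / (th + N) else 0.
pose d := fun k => 1 + c k.
have c0 : forall k, 0 <= c k.
  move=> k; rewrite /c; case: ifP => // ki.
  apply: divr_ge0; last exact: ltW.
  by rewrite subr_ge0; apply: hsorted; exact: ltnW.
have d0 : forall k, 0 < d k by move=> k; rewrite /d ltr_pwDl.
have Csum : N * \sum_l c l = th - r i.
  have -> : \sum_l c l = S / (th + N).
    rewrite /S mulr_suml [RHS]big_mkcond; apply: eq_bigr => l _.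
    by rewrite /c; case: ifP => // _; rewrite mul0r.
  by rewrite mulrA quad mulfK // gt_eqF.
pose e := fun k l : 'I_n => (if l == k then 0 else N) * c l - A k l * c l.
pose g := fun k : 'I_n => (th + N) * c k - (r k - r i).
have e0 : forall k l, 0 <= e k l.
  move=> k l; rewrite /e; case: eqP => [->|/eqP lk]; first by rewrite hdiag mul0r subrr.
  by rewrite -mulrBl mulr_ge0 // subr_ge0 Aoff // eq_sym.
have g0 : forall k, 0 <= g k.
  move=> k; rewrite /g /c; case: ifP => ki.
    by rewrite mulrC divfK ?subrr // gt_eqF.
  rewrite mulr0 sub0r oppr_ge0 subr_le0; apply: hsorted.
  by rewrite leqNgt ki.
have ident : forall k, th * d k - \sum_l A k l * d l = g k + \sum_l e k l.
  move=> k.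
  have h1 : \sum_l A k l * d l = r k + \sum_l A k l * c l.
    rewrite /d; under eq_bigr do rewrite mulrDr mulr1.
    by rewrite big_split.
  have h2 : \sum_l e k l = N * \sum_l c l - N * c k - \sum_l A k l * c l.
    rewrite /e sumrB; congr (_ - _).
    rewrite mulr_sumr [in RHS](bigD1 k) //= [in LHS](bigD1 k) //= eqxx mul0r add0r addrC addrK.
    by apply: eq_bigr => l /negbTE ->.
  rewrite h1 h2 Csum /g /d; ring.
have rowle : forall k, \sum_l A k l * d l <= th * d k.
  move=> k; rewrite -subr_ge0 ident addr_ge0 //; exact: sumr_ge0.
have tightE : forall k, \sum_l A k l * d l = th * d k <-> g k = 0 /\ forall l, e k l = 0.
  move=> k; split.
    move=> /eqP; rewrite eq_sym -subr_eq0 ident paddr_eq0 //; last exact: sumr_ge0.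
    case/andP => /eqP -> hs; split => // l.
    exact: (@psumr_eq0P _ _ _ _ (fun l _ => e0 k l) (eqP hs) l isT).
  move=> [hg he]; apply/eqP; rewrite eq_sym -subr_eq0 ident hg add0r.
  by apply/eqP; apply: big1 => l _; exact: he.
have [z0 z0in] : exists z0, z0 \in eigenseq A.
  have hs : size (eigenseq A) = n.
    rewrite /eigenseq; case: (closed_field_poly_normal _) => s0 /= hs.
    have := size_char_poly A.
    by rewrite hs (monicP (char_poly_monic A)) scale1r size_prod_XsubC; case.
  move: hs; case: (eigenseq A) => [|z s0] /= hs; first by rewrite -hs in hn.
  by exists z; rewrite inE eqxx.
rewrite /spectral_radius.
have [rho0 [rhoge rhoeq]] := @bigmax_props C _ (eigenseq A) (fun _ => true) (fun z : C => `|z|)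
   (fun x _ => normr_ge0 x).
move: rho0 rhoge rhoeq.
set rho := \big[Num.max/0]_(z <- eigenseq A) `|z|. move=> rho0 rhoge rhoeq.
have evec : forall z, z \in eigenseq A ->
   exists v : 'I_n -> C, (exists k, v k != 0) /\ forall k, \sum_l A k l * v l = z * v k.
  by move=> z zin; apply: (@eigenseq_mem C n A z).1.
have ub : rho <= th.
  case: rhoeq => [->|[z [zin _ ->]]] //.
  have [v [hv1 hv2]] := evec z zin.
  exact: (@pf_bound C n A d th z v hnn d0 rowle hv1 hv2).1.
split => //; split.
  move=> hrt.
  have [z [zin hz]] : exists z, z \in eigenseq A /\ `|z| = rho.
    case: rhoeq => [h0|[z [zin _ hz]]]; last by exists z.
    by exists z0; split => //; apply: le_anti; rewrite (rhoge z0 z0in isT) /= h0 normr_ge0.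
  have [v [hv1 hv2]] := evec z zin.
  have := (@pf_bound C n A d th z v hnn d0 rowle hv1 hv2).2.
  rewrite hz hrt => /(_ erefl hirr) htight.
  have hg : forall k, g k = 0 by move=> k; exact: ((tightE k).1 (htight k)).1.
  have he : forall k l, e k l = 0 by move=> k l; exact: ((tightE k).1 (htight k)).2.
  have rge : forall k : 'I_n, (i <= k)%N -> r k = r i.
    move=> k ik; have := hg k; rewrite /g /c ltnNge ik /= mulr0 sub0r.
    by move/eqP; rewrite oppr_eq0 subr_eq0 => /eqP.
  have cpos : forall l : 'I_n, (l < i)%N -> r l != r i -> c l != 0.
    move=> l li rl; rewrite /c li mulf_neq0 // ?subr_eq0 // invr_eq0 gt_eqF //.
  have offN : forall k l, k != l -> c l != 0 -> A k l = N.
    move=> k l kl cl; have := he k l; rewrite /e eq_sym (negbTE kl) -mulrBl.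
    move/eqP; rewrite mulf_eq0 (negbTE cl) orbF subr_eq0 => /eqP.
    by move->.
  case: (@arg_minnP _ i (fun k => r k == r i) (fun k => nat_of_ord k)) => //.
  move=> t /eqP rt tmin.
  have tle : (t <= i)%N by apply: tmin.
  have ltt : forall k : 'I_n, (k < t)%N -> r k != r i.
    move=> k kt; apply/negP => /tmin; by rewrite leqNgt kt.
  have rtk : forall k : 'I_n, (t <= k)%N -> r k = r t.
    move=> k tk; case: (leqP k i) => ki.
      apply: le_anti; rewrite hsorted //= rt; exact: hsorted.
    by rewrite rge ?rt // ltnW.
  case: (posnP t) => t0.
    by left => k l; rewrite (rtk k) ?(rtk l) ?t0.
  right; exists t; split => //.
  move=> k l kl lt; apply: offN => //; apply: cpos; last exact: ltt.
  exact: leq_trans lt tle.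
move=> H.
have tight : forall k, g k = 0 /\ forall l, e k l = 0.
  case: H => [hall|[t [t1 tle hA hr]]].
    have cz : forall l, c l = 0.
      by move=> l; rewrite /c; case: ifP => _ //; rewrite (hall l i) subrr mul0r.
    move=> k; split; first by rewrite /g cz mulr0 (hall k i) subrr subrr.
    by move=> l; rewrite /e cz !mulr0 subrr.
  have rti : r t = r i by rewrite (hr i tle).
  have cz : forall l : 'I_n, (t <= l)%N -> c l = 0.
    move=> l tl; rewrite /c; case: ifP => _ //.
    by rewrite (hr l tl) rti subrr mul0r.
  move=> k; split.
    rewrite /g /c; case: ifP => ki; first by rewrite mulrC divfK ?subrr // gt_eqF.
    rewrite mulr0 (hr k) ?rti ?subrr ?subr0 //.
    by apply: leq_trans tle _; rewrite leqNgt ki.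
  move=> l; rewrite /e; case: eqP => [->|/eqP lk]; first by rewrite hdiag !mul0r subrr.
  case: (ltnP l t) => lt; first by rewrite hA 1?eq_sym // subrr.
  by rewrite cz // !mulr0 subrr.
have htight : forall k, \sum_l A k l * d l = th * d k.
  by move=> k; apply/(tightE k)/tight.
have thin : th \in eigenseq A.
  apply/(@eigenseq_mem C n A th); exists d; split => //.
  by exists i; rewrite gt_eqF.
apply: le_anti; rewrite ub /=.
by rewrite -{1}(ger0_norm th0); exact: rhoge.
Qed.
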